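(* Let $k\in\mathbb{Z}$ and $\imath\in\mathbb{Z}_{>1}$. The rational polygon $\mathrm{conv}((0,0),(k+1/2,\imath),(k+4/5,\imath))$ contains no lattice point other than $(0,0)$ if and only if it is lattice equivalent to one of $\mathrm{conv}((0,0),(-1/2,\imath),(-1/5,\imath))$, $\mathrm{conv}((0,0),(1/2,\imath),(4/5,\imath))$, or, only when $\imath$ is even, $\mathrm{conv}((0,0),(\tfrac{\imath}{2}-\tfrac12,\imath),(\tfrac{\imath}{2}-\tfrac15,\imath))$.
   Context: Lattice equivalence means equivalence under maps $v\mapsto Av+w$ with $A\in\mathrm{GL}_2(\mathbb{Z})$ and $w\in\mathbb{Z}^2$. *)

(* Defs.v *)
From HB Require Import structures.
From mathcomp Require Import all_boot all_order all_algebra.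
Set Implicit Arguments. Unset Strict Implicit. Unset Printing Implicit Defensive.
Import Order.TTheory GRing.Theory Num.Theory.
Local Open Scope ring_scope.

Definition pt := (rat * rat)%type.

Definition conv3 (p q r : pt) (x : pt) : Prop :=
  exists a b c : rat, [/\ 0 <= a, 0 <= b, 0 <= c, a + b + c = 1 &
    x = (a * p.1 + b * q.1 + c * r.1, a * p.2 + b * q.2 + c * r.2)].

Definition lattice_pt (x : pt) : Prop :=
  exists m n : int, x = (m%:~R, n%:~R).

(* the affine map v |-> A v + w, A = [[a b];[c d]] *)
Definition affZ (a b c d w1 w2 : int) (x : pt) : pt :=
  (a%:~R * x.1 + b%:~R * x.2 + w1%:~R, c%:~R * x.1 + d%:~R * x.2 + w2%:~R).

Definition unimodular (a b c d : int) : Prop :=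
  a * d - b * c = 1 \/ a * d - b * c = -1.

Definition lattice_equiv (P Q : pt -> Prop) : Prop :=
  exists a b c d w1 w2 : int, [/\ unimodular a b c d,
    (forall x, P x -> Q (affZ a b c d w1 w2 x)) &
    (forall y, Q y -> exists2 x, P x & affZ a b c d w1 w2 x = y)].

(* Main.v *)
Require Import Defs.
From HB Require Import structures.
From mathcomp Require Import all_boot all_order all_algebra.
From mathcomp Require Import ring lra zify.
Import Order.TTheory GRing.Theory Num.Theory.
Local Open Scope ring_scope.


Definition goodw (i h : int) := exists n t : int,
  [/\ 0 < t, t <= i, 0 <= 2*n*i - h*t & 5*(2*n*i - h*t) <= 3*t].

Lemma no_mult (i x n : int) : 0 < i -> 0 < x -> x < i -> x = i * n -> False.
Proof. move=> H H0 H1 E; subst x; have [c|c] := lerP n 0; timeout 20 nia. Qed.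

Lemma caseS (i h s p : int) : 7 <= i -> 3 <= s -> s <= i - 3 -> h * s = 2*i * p + 1 ->
  goodw i h.
Proof.
move=> i7 s3 si Es.
pose j := ((i - 1) %/ s)%Z + 1.
have Ed := divz_eq (i-1) s.
have m0 : 0 <= ((i-1) %% s)%Z by apply: modz_ge0; lia.
have m1 : ((i-1) %% s)%Z < s by apply: ltz_pmod; lia.
move: Ed m0 m1; rewrite -/j.
have -> : ((i - 1) %/ s)%Z = j - 1 by rewrite /j; ring.
move: ((i-1) %% s)%Z => rm; clearbody j => Ed m0 m1.
have jl : i <= j * s by timeout 20 nia.
have ju : j * s <= i + s - 1 by timeout 20 nia.
have j1 : 1 <= j by timeout 20 nia.
have fs : (i+s-1)*(3*s+5) <= 6*i*s.
  have [s3'|s5] := eqVneq s 3.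
    rewrite s3'; timeout 20 nia.
  have [s4|s5'] := eqVneq s 4.
    rewrite s4 in Es; lia.
  have : 0 <= (s-5)*(i-3-s) by apply: mulr_ge0; lia.
  timeout 20 nia.
have key : j * (3*s+5) <= 6*i.
  have : j*s*(3*s+5) <= 6*i*s by timeout 20 nia.
  timeout 20 nia.
exists (h - j * p), (2*i - j*s); split; try timeout 20 nia.
Qed.

Lemma caseB (i h t1 n1 : int) : 2 <= i -> 3 <= h -> h <= 2*i - 3 -> h != i - 1 ->
  0 < t1 -> t1 < 2*i -> h * t1 + 1 = 2 * i * n1 -> goodw i h.
Proof.
move=> hi h3 h2 hne t0 t2 En.
have [t1le|t1gt] := lerP t1 i.
  have [t11|t11] := eqVneq t1 1.
    subst t1; exfalso; apply: (@no_mult (2*i) (h+1) n1); lia.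
  by exists n1, t1; split; lia.
have Es : h * (2*i - t1) = 2*i*(h - n1) + 1 by timeout 20 nia.
have s1 : 1 <= 2*i - t1 by lia.
have si : 2*i - t1 < i by lia.
move: Es s1 si; move: (h - n1) (2*i - t1) => p s Es s1 si.
clear En t1gt t2 t0 n1 t1.
have [s11|s11] := eqVneq s 1.
  subst s; exfalso; apply: (@no_mult (2*i) (h - 1) p); lia.
have [sim1|sim1] := eqVneq s (i-1).
  subst s.
  have E2 : i * (h - 2* p) = h + 1 by timeout 20 nia.
  have E3 : h - 2* p = 1.
    have [c|c] := lerP (h-2* p) 0; first by timeout 20 nia.
    have [c'|c'] := lerP 2 (h-2* p); first by timeout 20 nia.
    lia.
  rewrite E3 mulr1 in E2; move/eqP: hne; lia.
have [sim2|sim2] := eqVneq s (i-2).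
  subst s.
  have [i44|i44] := eqVneq i 4.
    subst i; exfalso; lia.
  have [i3|i3] := eqVneq i 3; first by subst i; lia.
  exists (h - 2* p), 4; split; timeout 20 nia.
have [s3|s3] := eqVneq s 3.
  subst s.
  have [i6|i6] := eqVneq i 6; first by subst i; exfalso; lia.
  apply: (@caseS i h 3 p); lia.
have [s2|s2] := eqVneq s 2; first by subst s; exfalso; lia.
apply: (@caseS i h s p); lia.
Qed.

Lemma core_wit (i h : int) : 2 <= i -> 3 <= h -> h <= 2*i - 3 -> h != i - 1 ->
  goodw i h.
Proof.
move=> hi h3 h2 hne.
have d0 : 0 <= gcdz h (2*i) by [].
have [d1|d1] := eqVneq (gcdz h (2*i)) 1.
- have [u [v Huv]] := Bezoutz h (2*i).
  rewrite d1 in Huv.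
  have Et := divz_eq (-u) (2*i).
  have t1ge : 0 <= ((- u) %% (2*i))%Z by apply: modz_ge0; lia.
  have t1lt : ((- u) %% (2*i))%Z < 2*i by apply: ltz_pmod; lia.
  move: Et t1ge t1lt; move: ((- u) %% (2*i))%Z ((- u) %/ (2*i))%Z => t1 q Et t1ge t1lt.
  have En : h * t1 + 1 = 2 * i * (v - q*h).
    have Et' : t1 = -u - q*(2*i) by lia.
    rewrite Et' -[X in _ + X = _]Huv; ring.
  have t1ne : t1 != 0.
    apply/eqP=> E; subst t1; apply: (@no_mult (2*i) 1 (v - q*h)); lia.
  apply: (@caseB i h t1 (v - q*h)); lia.
- have d2 : 2 <= gcdz h (2*i).
    have : gcdz h (2*i) != 0 by rewrite gcdz_eq0; apply/nandP; right; lia.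
    lia.
  have /dvdzP [a Ha] := dvdz_gcdl h (2*i).
  have /dvdzP [b Hb] := dvdz_gcdr h (2*i).
  move: d2 Ha Hb; move: (gcdz h (2*i)) => d d2 Ha Hb.
  have b1 : 0 < b by timeout 20 nia.
  exists a, b; split; timeout 20 nia.
Qed.


Lemma memT (p q c X Y : rat) : 0 < c -> p < q ->
  conv3 (0,0) (p,c) (q,c) (X,Y) <->
  [/\ 0 <= Y, Y <= c, p*Y <= X*c & X*c <= q*Y].
Proof.
move=> c0 pq; split.
- case=> a [b [e [a0 b0 e0 s E]]]; case: E => -> ->; simpl.
  have H1 : 0 <= e * (q - p) * c by apply: mulr_ge0; [apply: mulr_ge0 => //; lra | lra].
  have H2 : 0 <= b * (q - p) * c by apply: mulr_ge0; [apply: mulr_ge0 => //; lra | lra].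
  have H3 : 0 <= b * c by apply: mulr_ge0 => //; lra.
  have H4 : 0 <= e * c by apply: mulr_ge0 => //; lra.
  have H5 : 0 <= a * c by apply: mulr_ge0 => //; lra.
  split.
  + lra.
  + have -> : a * 0 + b * c + e * c = (1 - a) * c by rewrite -s; ring.
    lra.
  + have : p * (a * 0 + b * c + e * c) + e * (q - p) * c = (a * 0 + b * p + e * q) * c by ring.
    lra.
  + have : (a * 0 + b * p + e * q) * c + b * (q - p) * c = q * (a * 0 + b * c + e * c) by ring.
    lra.
- case=> Y0 Yc h1 h2.
  have qp : 0 < q - p by lra.
  have cne : c != 0 by rewrite gt_eqF.
  have qpne : q - p != 0 by rewrite gt_eqF.
  exists ((c - Y)/c), ((q*Y - X*c)/((q-p)*c)), ((X*c - p*Y)/((q-p)*c)).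
  split.
  + apply: divr_ge0; lra.
  + apply: divr_ge0; [lra | apply: mulr_ge0; lra].
  + apply: divr_ge0; [lra | apply: mulr_ge0; lra].
  + field; apply/andP; split => //.
  + congr (_, _) => /=; field; apply/andP; split => //.
Qed.




Lemma conv_int (p q : rat) (a b i n t : int) : 0 < i -> p < q ->
  10 * p = a%:~R -> 10 * q = b%:~R ->
  conv3 (0,0) (p, i%:~R) (q, i%:~R) (n%:~R, t%:~R) <->
  [/\ 0 <= t, t <= i, a * t <= 10 * n * i & 10 * n * i <= b * t].
Proof.
move=> i0 pq ha hb.
have c0 : 0 < (i%:~R : rat) by rewrite ltr0z.
rewrite memT //.
have E : forall u v u' v' : rat, 10 * u = u' -> 10 * v = v' -> (u <= v) = (u' <= v').
  by move=> u v u' v' <- <-; rewrite ler_pM2l.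
have -> : (p * t%:~R <= n%:~R * i%:~R) = ((a*t)%:~R <= (10*n*i)%:~R :> rat).
  by apply: E; [rewrite mulrA ha | ]; rewrite ?intrM; ring.
have -> : (n%:~R * i%:~R <= q * t%:~R) = ((10*n*i)%:~R <= (b*t)%:~R :> rat).
  by apply: E; [ | rewrite mulrA hb]; rewrite ?intrM; ring.
by rewrite !ler_int ler0z.
Qed.

Definition LFab (i a b : int) := forall n t : int, 0 < t -> t <= i ->
  a * t <= 10 * n * i -> 10 * n * i <= b * t -> False.

Lemma LF_iff (p q : rat) (a b i : int) : 0 < i -> p < q ->
  10 * p = a%:~R -> 10 * q = b%:~R ->
  (forall x, conv3 (0,0) (p, i%:~R) (q, i%:~R) x -> lattice_pt x -> x = (0,0))
  <-> LFab i a b.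
Proof.
move=> i0 pq ha hb; split.
- move=> H n t t0 ti h1 h2.
  have HH : ((n%:~R, t%:~R) : pt) = (0,0).
    apply: H; last by exists n, t.
    rewrite (@conv_int p q a b i n t i0 pq ha hb); split => //; lia.
  case: HH => _ /eqP; rewrite intr_eq0 => /eqP tz; lia.
- move=> H [X Y] hx [n [t E]]; case: E => EX EY; subst X Y.
  move: hx; rewrite (@conv_int p q a b i n t i0 pq ha hb) => -[t0 ti h1 h2].
  have [tz|tp] := eqVneq t 0.
    subst t; rewrite !mulr0 in h1 h2.
    have nz : n = 0 by timeout 20 nia.
    by subst n.
  exfalso; apply: (H n t) => //; lia.
Qed.

Lemma lf_transfer (P Q : pt -> Prop) : lattice_equiv P Q -> P (0,0) ->
  (forall x, Q x -> lattice_pt x -> x = (0,0)) ->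
  forall x, P x -> lattice_pt x -> x = (0,0).
Proof.
case=> a [b [c [d [w1 [w2 [U f g]]]]]] P0 HQ x Px [m [n E]]; subst x.
have cast : forall z : int, (z%:~R : rat) = 0 -> z = 0.
  by move=> z /eqP; rewrite intr_eq0 => /eqP.
have A0 := HQ _ (f _ P0).
have : affZ a b c d w1 w2 (0,0) = (0,0).
  apply: A0; exists w1, w2; rewrite /affZ /=; congr (_,_); ring.
rewrite /affZ /= !mulr0 !add0r; case=> /cast W1 /cast W2; subst w1 w2.
have : affZ a b c d 0 0 (m%:~R, n%:~R) = (0,0).
  apply: HQ; first exact: f.
  exists (a* m + b*n), (c* m + d*n); rewrite /affZ /=; congr (_,_); rewrite !mulr0z addr0; 
  by rewrite intrD !intrM.
rewrite /affZ /= !mulr0z !addr0 -!intrM -!intrD.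
case=> /cast e1 /cast e2.
have em : (a*d - b*c) * m = d*(a* m + b*n) - b*(c* m + d*n) by ring.
have en : (a*d - b*c) * n = a*(c* m + d*n) - c*(a* m + b*n) by ring.
rewrite e1 e2 !mulr0 subr0 in em en.
case: U => U; rewrite U in em en; rewrite ?mul1r ?mulN1r in em en.
  by subst m n.
have -> : m = 0 by lia.
have -> : n = 0 by lia.
by [].
Qed.

Lemma shear_equiv (p q p' q' c : rat) (m : int) : 0 < c -> p < q ->
  p' = p - m%:~R * c -> q' = q - m%:~R * c ->
  lattice_equiv (conv3 (0,0) (p,c) (q,c)) (conv3 (0,0) (p',c) (q',c)).
Proof.
move=> c0 pq -> ->.
have pq' : p - m%:~R * c < q - m%:~R * c by lra.
exists 1, (-m), 0, 1, 0, 0; split.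
- by left; ring.
- move=> [X Y]; rewrite /affZ /= !memT // => -[h0 h1 h2 h3].
  rewrite !mulr1z !mulr0z mulrNz !addr0 !mul0r !add0r !mul1r; split => //; nra.
- move=> [X Y]; rewrite memT // => -[h0 h1 h2 h3].
  exists (X + m%:~R * Y, Y).
    rewrite memT //; split => //; nra.
  rewrite /affZ /= !mulr1z !mulr0z mulrNz !addr0 !mul0r !add0r !mul1r; congr (_,_); ring.
Qed.

Lemma LF1 (i : int) : 0 < i -> LFab i (-5) (-2).
Proof. move=> i0 n t t0 ti h1 h2; have [c|c] := lerP 0 n; timeout 20 nia. Qed.

Lemma LF2 (i : int) : 0 < i -> LFab i 5 8.
Proof. move=> i0 n t t0 ti h1 h2; have [c|c] := lerP n 0; timeout 20 nia. Qed.

Lemma LF3 (i m : int) : 0 < i -> i = 2 * m -> LFab i (5*i - 5) (5*i - 2).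
Proof.
move=> i0 im n t t0 ti h1 h2.
have E : 10 * n * i = 5 * i * (2*n - t) + 5 * i * t by ring.
have [z Ez] : exists z, z = 2*n - t by eexists.
rewrite -Ez in E.
have [c|c] := lerP 0 z; first by timeout 20 nia.
have [c'|c'] := lerP z (-2); first by timeout 20 nia.
have z1 : z = -1 by lia.
subst z.
have ti' : t = i by timeout 20 nia.
subst t; lia.
Qed.

Lemma LF_shift (i k q r : int) : k = q * i + r ->
  LFab i (10*k+5) (10*k+8) -> LFab i (10*r+5) (10*r+8).
Proof.
move=> E H n t t0 ti h1 h2; apply: (H (n + q*t) t) => //.
- have -> : (10*k+5)*t = (10*r+5)*t + 10*(q*t)*i by rewrite E; ring.
  have -> : 10 * (n + q*t) * i = 10*n*i + 10*(q*t)*i by ring.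
  lia.
- have -> : (10*k+8)*t = (10*r+8)*t + 10*(q*t)*i by rewrite E; ring.
  have -> : 10 * (n + q*t) * i = 10*n*i + 10*(q*t)*i by ring.
  lia.
Qed.

Theorem mainTheorem13 (k i : int) (hi : 1 < i) :
  (forall x : pt,
     conv3 (0, 0) (k%:~R + 1 / 2%:R, i%:~R) (k%:~R + 4%:R / 5%:R, i%:~R) x ->
     lattice_pt x -> x = (0, 0))
  <->
  [\/ lattice_equiv
        (conv3 (0, 0) (k%:~R + 1 / 2%:R, i%:~R) (k%:~R + 4%:R / 5%:R, i%:~R))
        (conv3 (0, 0) (- (1 / 2%:R), i%:~R) (- (1 / 5%:R), i%:~R)),
      lattice_equiv
        (conv3 (0, 0) (k%:~R + 1 / 2%:R, i%:~R) (k%:~R + 4%:R / 5%:R, i%:~R))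
        (conv3 (0, 0) (1 / 2%:R, i%:~R) (4%:R / 5%:R, i%:~R)) |
      (2 %| i)%Z /\
      lattice_equiv
        (conv3 (0, 0) (k%:~R + 1 / 2%:R, i%:~R) (k%:~R + 4%:R / 5%:R, i%:~R))
        (conv3 (0, 0) (i%:~R / 2%:R - 1 / 2%:R, i%:~R)
                      (i%:~R / 2%:R - 1 / 5%:R, i%:~R))].
Proof.
have i0 : 0 < i by lia.
have c0 : 0 < (i%:~R : rat) by rewrite ltr0z.
have pq : k%:~R + 1 / 2%:R < k%:~R + 4%:R / 5%:R :> rat by lra.
have ha : 10 * (k%:~R + 1 / 2%:R) = (10*k+5)%:~R :> rat by field.
have hb : 10 * (k%:~R + 4%:R / 5%:R) = (10*k+8)%:~R :> rat by field.
have P0 : conv3 (0, 0) (k%:~R + 1 / 2%:R, i%:~R) (k%:~R + 4%:R / 5%:R, i%:~R) (0,0).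
  by rewrite memT //; split; rewrite ?mulr0 ?mul0r //; exact: ltW.
split.
- move=> H; have LFk := (@LF_iff _ _ _ _ _ i0 pq ha hb).1 H.
  have Ek := divz_eq k i.
  have r0 : 0 <= (k %% i)%Z by apply: modz_ge0; lia.
  have r1 : (k %% i)%Z < i by apply: ltz_pmod.
  move: Ek r0 r1; move: (k %/ i)%Z (k %% i)%Z => q r Ek r0 r1.
  have LFr := @LF_shift _ _ _ _ Ek LFk.
  have [rz|rnz] := eqVneq r 0.
    apply: Or32; apply: (@shear_equiv _ _ _ _ _ q) => //; rewrite Ek rz; by field.
  have [ri|rni] := eqVneq r (i-1).
    apply: Or31; apply: (@shear_equiv _ _ _ _ _ (q+1)) => //; rewrite Ek ri; by field.
  have [ri2|rni2] := eqVneq i (2*r+2).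
    apply: Or33; split; first by apply/dvdzP; exists (r+1); lia.
    apply: (@shear_equiv _ _ _ _ _ q) => //; rewrite Ek; rewrite [in i%:~R / _]ri2; by field.
  exfalso.
  have [n [t [t0 ti w0 w1]]] := @core_wit i (2*r+1) ltac:(lia) ltac:(lia) ltac:(lia)
     ltac:(apply/eqP; lia).
  apply: (LFr n t) => //; lia.
- have HT : forall (p' q' : rat) (a b : int), p' < q' -> 10 * p' = a%:~R -> 10 * q' = b%:~R ->
      LFab i a b ->
      lattice_equiv (conv3 (0, 0) (k%:~R + 1 / 2%:R, i%:~R) (k%:~R + 4%:R / 5%:R, i%:~R))
                    (conv3 (0,0) (p', i%:~R) (q', i%:~R)) ->
      (forall x : pt,
     conv3 (0, 0) (k%:~R + 1 / 2%:R, i%:~R) (k%:~R + 4%:R / 5%:R, i%:~R) x ->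
     lattice_pt x -> x = (0, 0)).
    move=> p' q' a b pq' ha' hb' LF EQ.
    apply: (@lf_transfer _ _ EQ P0).
    exact: (@LF_iff _ _ _ _ _ i0 pq' ha' hb').2.
  case.
  + apply: (HT _ _ (-5) (-2)); [lra | by field | by field | exact: LF1].
  + apply: (HT _ _ 5 8); [lra | by field | by field | exact: LF2].
  + case=> /dvdzP [m Hm].
    apply: (HT _ _ (5*i - 5) (5*i-2)); [lra | by field | by field | ].
    apply: (@LF3 i m i0); lia.
Qed.
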